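(* Let $\Gamma$ be a countable group acting affinely on $\mathbb{R}^n$, let $\mathsf W\subseteq\mathbb{R}^n$ be a (not necessarily connected) open subset, and let $h:\mathsf W\to\mathbb{R}^n$ be a $C^1$ map preserving $\Gamma$-orbits (i.e. $h(x)\in\Gamma\cdot x$ for all $x$). Then for each $x\in\mathsf W$ there is $\gamma\in\Gamma$ such that $h$ and the map $y\mapsto\gamma\cdot y$ have the same germ at $x$.
   Context: Two maps have the same germ at $x$ if they agree on some neighbourhood of $x$. *)

(* Defs.v *)
From HB Require Import structures.
From mathcomp Require Import all_boot all_order all_algebra.
From mathcomp Require Import all_classical all_reals all_analysis.
Set Implicit Arguments. Unset Strict Implicit. Unset Printing Implicit Defensive.
Import Order.TTheory GRing.Theory Num.Theory.
Import numFieldNormedType.Exports.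
Local Open Scope classical_set_scope.
Local Open Scope ring_scope.

Definition is_group (G : Type) (mul : G -> G -> G) (one : G) (inv : G -> G) :=
  [/\ forall a b c, mul a (mul b c) = mul (mul a b) c,
      forall a, mul one a = a,
      forall a, mul a one = a,
      forall a, mul (inv a) a = one &
      forall a, mul a (inv a) = one].

Definition is_affine_map (R : realType) (n : nat)
  (f : 'rV[R]_n -> 'rV[R]_n) :=
  exists (A : 'M[R]_n) (b : 'rV[R]_n), forall x, f x = x *m A + b.

Definition affine_action (R : realType) (n : nat) (G : Type)
  (mul : G -> G -> G) (one : G) (act : G -> 'rV[R]_n -> 'rV[R]_n) :=
  [/\ forall x, act one x = x,
      forall g k x, act (mul g k) x = act g (act k x) &
      forall g, is_affine_map (act g)].

Definition C1_on (R : realType) (n : nat) (W : set 'rV[R]_n)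
  (h : 'rV[R]_n -> 'rV[R]_n) :=
  (forall x, W x -> differentiable h x) /\
  (forall v x, W x -> {for x, continuous (fun y => 'd h y v)}).

Definition same_germ (R : realType) (n : nat) (U : Type)
  (f g : 'rV[R]_n -> U) (x : 'rV[R]_n) :=
  \forall y \near x, f y = g y.

(* Main.v *)
Require Import Defs.
From HB Require Import structures.
From mathcomp Require Import all_boot all_order all_algebra.
From mathcomp Require Import all_classical all_reals all_analysis.
From mathcomp Require Import ring lra.
Import Order.TTheory GRing.Theory Num.Theory Num.Def.
Import numFieldNormedType.Exports.
Local Open Scope classical_set_scope.
Local Open Scope ring_scope.

Section Aux.
Variable R : realType.

Lemma subsingleton_closed (T : set R) :
  (forall x y, T x -> T y -> x = y) -> closed T.
Proof.
move=> sT; case: (pselect (exists x, T x)) => [[x Tx]|nT].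
  have -> : T = [set y | y = x].
    by apply/seteqP; split => y /=; [move=> Ty; exact: sT|move=> ->].
  exact: closed_eq.
have -> : T = set0.
  by apply/seteqP; split => y //= Ty; apply: nT; exists y.
exact: closed0.
Qed.

Lemma subsingleton_dense (T : set R) :
  (forall x y, T x -> T y -> x = y) -> dense (~` T).
Proof.
move=> sT O [y Oy] oO.
have /nbhs_ballP[e e0 beO] : nbhs y O by exact: open_nbhs_nbhs.
have Oy2 : O (y + e / 2).
  apply: beO; rewrite -ball_normE /= opprD addrA subrr add0r normrN.
  by rewrite ger0_norm ?divr_ge0 ?ltW // ltr_pdivrMr // ltr_pMr // ltr1n.
case: (pselect (T y)) => Ty; last by exists y.
exists (y + e / 2); split => // Ty2.
have := sT _ _ Ty Ty2 => /eqP; rewrite -subr_eq0 opprD addrA subrr add0r oppr_eq0.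
by rewrite mulf_eq0 invr_eq0 pnatr_eq0 orbF gt_eqF.
Qed.

Lemma no_cover (I : countType) (S : I -> set R) (a b : R) : a < b ->
  (forall i x y, S i x -> S i y -> x = y) ->
  ~ ([set x | a < x < b] `<=` \bigcup_(i in setT) S i).
Proof.
move=> ab sS cov.
pose T n := if @unpickle I n is Some i then S i else set0.
have sT n : forall x y, T n x -> T n y -> x = y.
  rewrite /T; case: (unpickle n) => [i|] //; exact: sS.
have oF : forall n, open (~` T n) /\ dense (~` T n).
  move=> n; split; last by apply: subsingleton_dense; exact: sT.
  by rewrite openC; apply: subsingleton_closed; exact: sT.
have ne0 : [set x | a < x < b] !=set0.
  exists ((a + b) / 2); apply/andP; split.
  + by rewrite ltr_pdivlMr // mulr_natr mulr2n ltrD2l.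
  + by rewrite ltr_pdivrMr // mulr_natr mulr2n ltrD2r.
have op : open [set x | a < x < b].
  have -> : [set x | a < x < b] = `]a, b[%classic.
    by apply/seteqP; split => x /=; rewrite in_itv.
  exact: itv_open.
have [z [abz Fz]] := @Baire R R (fun n => ~` T n) oF [set x | a < x < b] ne0 op.
have [i _ Siz] := cov z abz.
apply: (Fz (pickle i) Logic.I); by rewrite /T pickleK.
Qed.

Lemma const_of_cover (I : countType) (S : I -> set R) (phi : R -> R) :
  (forall i x y, S i x -> S i y -> x = y) ->
  (forall t, 0 <= t <= 1 -> {for t, continuous phi}) ->
  (forall t, 0 <= t <= 1 -> exists i, S i (phi t)) -> phi 0 = phi 1.
Proof.
move=> sS cphi cov; case: (eqVneq (phi 0) (phi 1)) => // ne; exfalso.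
have ab : minr (phi 0) (phi 1) < maxr (phi 0) (phi 1).
  by move: ne; rewrite minElt maxElt; case: (ltgtP (phi 0) (phi 1)) => //= _; rewrite eqxx.
have := @no_cover I S _ _ ab sS; apply => v /andP[av vb].
have [c c01 <-] : exists2 c, c \in `[0, 1] & phi c = v.
  apply: IVT => //; last by rewrite (ltW av) (ltW vb).
  apply: continuous_in_subspaceT => t; rewrite inE /= in_itv /=.
  exact: cphi.
rewrite in_itv /= in c01.
by have [i Si] := cov c c01; exists i.
Qed.
End Aux.


Section Aux2.
Variables (R : realType) (n : nat).
Local Notation V := 'rV[R]_n.

Definition isolated_in (E : set R) (t : R) :=
  exists p q : rat, ratr p < t < ratr q /\
    forall s, ratr p < s < ratr q -> E s -> s = t.

Lemma vec_const (G : countType) (E : G -> set R) (al : G -> V) (psi : R -> V) :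
  (forall t, 0 <= t <= 1 -> {for t, continuous psi}) ->
  (forall t, 0 <= t <= 1 -> exists g, E g t /\ (psi t = al g \/ isolated_in (E g) t)) ->
  psi 0 = psi 1.
Proof.
move=> cpsi K; apply/rowP => j.
pose I := (G + (G * rat * rat))%type.
pose S (i : I) : set R := match i with
  | inl g => [set v | v = al g ord0 j]
  | inr (g, p, q) => [set v | exists t, [/\ ratr p < t < ratr q, E g t,
       (forall s, ratr p < s < ratr q -> E g s -> s = t) & v = psi t ord0 j]]
  end.
have sS : forall i x y, S i x -> S i y -> x = y.
  case=> [g|[[g p] q]] x y /=; first by move=> -> ->.
  move=> [t1 [pt1 Et1 u1 ->]] [t2 [pt2 Et2 u2 ->]].
  by rewrite (u1 _ pt2 Et2).
apply: (@const_of_cover R I S (fun t => psi t ord0 j) sS).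
  move=> t t01; apply: (@continuous_comp _ _ _ psi (fun M : V => M ord0 j)).
    exact: cpsi.
  exact: coord_continuous.
move=> t t01; have [g [Egt [->|[p [q [pq u]]]]]] := K t t01.
  by exists (inl g).
by exists (inr (g, p, q)); exists t; split.
Qed.

Lemma affine_seg (a : V -> V) : is_affine_map a ->
  forall (t : R) u x, a (t *: u + x) = a x + t *: (a (u + x) - a x).
Proof.
move=> [A [b e]] t u x; rewrite !e mulmxDl -scalemxAl mulmxDl.
by rewrite -(addrA (u *m A)) addrK [RHS]addrC addrA.
Qed.


Lemma seg_affine (G : countType) (act : G -> V -> V) (h : V -> V) (x u : V) :
  (forall g, is_affine_map (act g)) ->
  (forall t : R, 0 <= t <= 1 -> differentiable h (t *: u + x)) ->
  (forall t : R, 0 <= t <= 1 ->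
     {for (t *: u + x), continuous (fun y => 'd h y u)}) ->
  (forall t : R, 0 <= t <= 1 -> exists g, h (t *: u + x) = act g (t *: u + x)) ->
  h (u + x) = h x + 'd h x u.
Proof.
move=> aff dif cd orb.
pose f t := h (t *: u + x). pose D t := 'd h (t *: u + x) u.
pose E g t := h (t *: u + x) = act g (t *: u + x).
have cseg : forall t : R, {for t, continuous (fun s : R => s *: u + x)}.
  move=> t; apply: continuousD; [exact: continuousZr_tmp|exact: cst_continuous].
have cf : forall t, 0 <= t <= 1 -> {for t, continuous f}.
  move=> t t01; apply: (continuous_comp (cseg t)).
  exact: differentiable_continuous (dif t t01).
have cD : forall t, 0 <= t <= 1 -> {for t, continuous D}.
  by move=> t t01; apply: (continuous_comp (cseg t) (cd t t01)).
have key : forall t, 0 <= t <= 1 -> exists g, E g t /\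
   ((D t = act g (u + x) - act g x /\ f t - t *: D t = act g x)
    \/ isolated_in (E g) t).
  move=> t t01; have [g Eg] := orb t t01; exists g; split => //.
  case: (pselect (isolated_in (E g) t)) => iso; [by right|left].
  set be := act g (u + x) - act g x.
  have Dt : D t = be.
    apply: contra_notP iso => /eqP neq.
    have e0 : 0 < `|D t - be| by rewrite normr_gt0 subr_eq0.
    have cv : (fun s : R => s^-1 *: (h (s *: u + (t *: u + x)) - h (t *: u + x)))
                @ 0^' --> D t.
      rewrite /D -deriveE; last exact: dif.
      have := diff_derivable (v:=u) (dif t t01); rewrite /derivable /derive /=; exact.
    have : \forall s \near (0:R)^', `|D t - s^-1 *: (h (s *: u + (t *: u + x)) - h (t *: u + x))| < `|D t - be|.
      exact: (cvgr_dist_lt _ _ cv _ e0).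
    move=> /nbhs_ballP [d /= d0 Hd].
    have [p] := @rat_in_itvoo R (t - d) t ltac:(lra).
    rewrite in_itv /= => /andP[pl pr].
    have [q] := @rat_in_itvoo R t (t + d) ltac:(lra).
    rewrite in_itv /= => /andP[ql qr].
    exists p, q; split; first by rewrite pr ql.
    move=> s /andP[ps sq] Egs; case: (eqVneq s t) => [->//|nst]; exfalso.
    have hb : ball (0:R) d (s - t).
      rewrite -ball_normE /= sub0r normrN ltr_distl; apply/andP; split; lra.
    have hst : s - t != 0 by rewrite subr_eq0.
    have := Hd (s - t) hb hst.
    rewrite addrA -scalerDl subrK /E in Egs *.
    rewrite Egs Eg !(affine_seg _ (aff g)) -/be.
    by rewrite opprD addrACA subrr add0r -scalerBl scalerA mulVf ?scale1r ?ltxx.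
  by split => //; rewrite /f Eg Dt (affine_seg _ (aff g)) -/be addrK.
have h1 : D 0 = D 1.
  apply: (@vec_const G E (fun g => act g (u + x) - act g x) D cD).
  move=> t t01; have [g [Eg [[Dt _]|iso]]] := key t t01; exists g; split.
  - exact: Eg.
  - by left.
  - exact: Eg.
  - by right.
have h2 : f 0 - 0 *: D 0 = f 1 - 1 *: D 1.
  apply: (@vec_const G E (fun g => act g x) (fun t => f t - t *: D t)).
    move=> t t01; apply: continuousB; first exact: cf.
    have ci : {for t, continuous (fun s : R => s)} by move=> ?; exact.
    exact: (@continuousZ _ _ _ (fun s : R => s) D t ci (cD t t01)).
  move=> t t01; have [g [Eg [[_ ft]|iso]]] := key t t01; exists g; split.
  - exact: Eg.
  - by left.
  - exact: Eg.
  - by right.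
move: h1 h2; rewrite /f /D !scale0r !add0r !scale1r subr0 => h1 h2.
transitivity (h (u + x) - 'd h (u + x) u + 'd h (u + x) u).
  by rewrite subrK.
exact: (f_equal2 +%R (esym h2) (esym h1)).
Qed.
End Aux2.


Lemma mx_coord_cont (R : realType) (T : topologicalType) m k
  (f : T -> 'M[R]_(m, k)) x :
  (forall i j, {for x, continuous (fun t => f t i j)}) -> {for x, continuous f}.
Proof.
move=> fc A [P Pn PA].
have : \forall t \near x, forall ij : ('I_m * 'I_k)%type, P ij.1 ij.2 (f t ij.1 ij.2).
  apply: filter_forall => -[i j]; exact: (fc i j _ (Pn i j)).
by apply: filterS => t Pt; apply: PA => i j; exact: (Pt (i, j)).
Qed.

Lemma mulmx_cont (R : realType) n k (A : 'M[R]_(n, k)) :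
  continuous (fun z : 'rV[R]_n => z *m A).
Proof.
move=> z; apply: mx_coord_cont => i j.
have -> : (fun t : 'rV[R]_n => (t *m A) i j) =
          (fun t => \sum_(l < n) t i l * A l j).
  by apply: funext => t; rewrite mxE.
have := @continuous_big R 'I_n +%R 0 xpredT add_continuous 'rV[R]_n
   (index_enum 'I_n) (fun l t => t i l * A l j).
move=> /(_ _ z); apply => l _ w.
apply: (@continuousM _ _ (fun t : 'rV[R]_n => t i l) (fun=> A l j)).
  exact: coord_continuous.
exact: cst_continuous.
Qed.

Lemma affine_cont (R : realType) n (a : 'rV[R]_n -> 'rV[R]_n) :
  is_affine_map a -> continuous a.
Proof.
move=> [A [b e]]; have -> : a = (fun z => z *m A + b) by apply: funext.
move=> z.
have := @continuousD R _ 'rV[R]_n (fun z : 'rV[R]_n => z *m A) (fun=> b) z (@mulmx_cont R n n A z) (@cst_continuous _ _ b z).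
exact.
Qed.


Section BaireRV.
Variables (R : realType) (n : nat).
Definition rVc := 'rV[R]_n.
HB.instance Definition _ := NormedModule.on rVc.
HB.instance Definition _ := Complete.on rVc.
Lemma baire_rV (F : nat -> set 'rV[R]_n) :
  (forall i, open (F i) /\ dense (F i)) -> dense (\bigcap_i F i).
Proof. exact: (@Baire R rVc F). Qed.
End BaireRV.


Theorem corollary1 (R : realType) (n : nat) (G : countType)
  (mul : G -> G -> G) (one : G) (inv : G -> G)
  (act : G -> 'rV[R]_n -> 'rV[R]_n)
  (W : set 'rV[R]_n) (h : 'rV[R]_n -> 'rV[R]_n) :
  is_group mul one inv ->
  affine_action mul one act ->
  open W ->
  C1_on W h ->
  (forall x, W x -> exists g : G, h x = act g x) ->
  forall x, W x -> exists g : G, same_germ h (act g) x.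
Proof.
move=> grp [act1 actM aff] oW [dif cdif] orb x Wx.
have [r r0 brW] : exists2 r : R, 0 < r & ball x r `<=` W.
  have : nbhs x W by exact: (open_nbhs_nbhs (conj oW Wx)).
  by move=> /nbhs_ballP[r r0 H]; exists r.
have bseg : forall y (t : R), ball x r y -> 0 <= t <= 1 ->
    ball x r (t *: (y - x) + x).
  move=> y t; rewrite -!ball_normE /= => bxy /andP[t0 t1].
  rewrite opprD addrCA subrr addr0 normrN normrZ ger0_norm //.
  apply: le_lt_trans bxy; rewrite distrC; exact: ler_piMl (normr_ge0 _) t1.
have haff : forall y, ball x r y -> h y = h x + 'd h x (y - x).
  move=> y bxy.
  have E := @seg_affine R n G act h x (y - x) aff
    (fun t t01 => dif _ (brW _ (bseg y t bxy t01)))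
    (fun t t01 => cdif (y - x) _ (brW _ (bseg y t bxy t01)))
    (fun t t01 => orb _ (brW _ (bseg y t bxy t01))).
  by rewrite subrK in E.
pose k g y := h x + 'd h x (y - x) - act g y.
case: (pselect (exists g, forall y, k g y = 0)) => [[g kg]|nok].
  exists g; rewrite /same_germ; apply/nbhs_ballP; exists r => // y bxy.
  by rewrite (haff y bxy); apply/eqP; rewrite -subr_eq0; apply/eqP; exact: kg.
exfalso.
have nz : forall g, exists y0, k g y0 != 0.
  move=> g; case: (pselect (exists y0, k g y0 != 0)) => // H; exfalso.
  apply: nok; exists g => y; case: (eqVneq (k g y) 0) => // hy.
  by exfalso; apply: H; exists y.
have dc : continuous ('d h x) := diff_continuous (dif x Wx).
have kcont : forall g, continuous (k g).
  move=> g y.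
  have c1 : {for y, continuous (fun z : 'rV[R]_n => 'd h x (z - x))}.
    apply: (@continuous_comp _ _ _ (fun z : 'rV[R]_n => z - x) ('d h x)).
      exact: (@continuousD R _ 'rV[R]_n (fun z : 'rV[R]_n => z) (fun=> - x) y
               (fun A HA => HA) (@cst_continuous _ _ (- x) y)).
    exact: dc.
  have c2 : {for y, continuous (fun z : 'rV[R]_n => h x + 'd h x (z - x))}.
    exact: (@continuousD R _ 'rV[R]_n (fun=> h x) _ y (@cst_continuous _ _ (h x) y) c1).
  have H := (@continuousB R _ 'rV[R]_n _ (act g) y c2 (@affine_cont R n (act g) (aff g) y)).
  exact: H.
have kaff : forall g (e : R) p y0, k g p = 0 ->
    k g (e *: (y0 - p) + p) = e *: k g y0.
  move=> g e p y0; rewrite /k => kp.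
  rewrite (@affine_seg R n _ (aff g)) subrK -[e *: (y0 - p) + p - x]addrA.
  rewrite linearD linearZ.
  have -> : y0 - p = (y0 - x) - (p - x).
    by rewrite opprB addrA subrK.
  rewrite linearB.
  apply/rowP => j; move/rowP: kp => /(_ j); rewrite !mxE => kp.
  have cj : h x ord0 j = act g p ord0 j - 'd h x (p - x) ord0 j by lra.
  rewrite cj; ring.
have kopen : forall g, open (~` [set y | k g y = 0]).
  move=> g; rewrite openE => y /= kyn.
  have e0 : 0 < `|k g y| by rewrite normr_gt0; apply/eqP.
  have : \forall z \near y, `|k g y - k g z| < `|k g y|.
    exact: (cvgr_dist_lt _ _ (kcont g y) _ e0).
  apply: filterS => z H kz0.
  by rewrite kz0 subr0 ltxx in H.
have kdense : forall g, dense (~` [set y | k g y = 0]).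
  move=> g O [p Op] oO.
  case: (eqVneq (k g p) 0) => kp; last by exists p; split => //= /eqP; rewrite (negPf kp).
  have [y0 ky0] := nz g.
  have c0 : {for 0, continuous (fun e : R => e *: (y0 - p) + p)}.
    apply: continuousD; [exact: continuousZr_tmp|exact: cst_continuous].
  have : nbhs (0 : R) ((fun e : R => e *: (y0 - p) + p) @^-1` O).
    apply: c0; rewrite scale0r add0r; exact: (open_nbhs_nbhs (conj oO Op)).
  move=> /nbhs_ballP [d d0 Hd].
  have d20 : 0 < d / 2 by rewrite divr_gt0.
  exists (d / 2 *: (y0 - p) + p); split.
    apply: Hd; rewrite -ball_normE /= sub0r normrN ger0_norm ?ltW //.
    by rewrite ltr_pdivrMr // ltr_pMr // ltr1n.
  rewrite /= (kaff g _ _ _ kp) => /eqP.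
  by rewrite scaler_eq0 (gt_eqF d20) (negPf ky0).
pose F i : set 'rV[R]_n :=
  if @unpickle G i is Some g then ~` [set y | k g y = 0] else setT.
have oF : forall i, open (F i) /\ dense (F i).
  move=> i; rewrite /F; case: (unpickle i) => [g|]; first by split.
  split; first exact: openT.
  by move=> O [p Op] _; exists p.
have [y [bxy Fy]] := @baire_rV R n F oF (ball x r) (ex_intro _ x (ballxx x r0))
  (ball_open x r).
have [g hg] := orb y (brW y bxy).
have := Fy (pickle g) Logic.I; rewrite /F pickleK /=; apply.
by rewrite /k -(haff y bxy) hg subrr.
Qed.
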